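(* Let $\|\cdot\|$ be a monotone norm on $\mathbb{R}^K$, let $T \ge 1$, and let $\boldsymbol{\alpha}_1,\dots,\boldsymbol{\alpha}_T \in \Delta(K)$ and $\mathbf{l}_1,\dots,\mathbf{l}_T \in [0,1]^K$. Let $\bar{\mathbf{r}}_T = \frac{1}{T}\sum_{t=1}^T (\boldsymbol{\alpha}_t\odot\mathbf{l}_t, \mathbf{l}_t) \in \mathbb{R}^K\times\mathbb{R}^K$ and suppose $\min_{\mathbf{s} \in S}\|\bar{\mathbf{r}}_T - \mathbf{s}\|^+ \le \gamma$. Then \[ \Big\|\sum_{t=1}^T \boldsymbol{\alpha}_t\odot\mathbf{l}_t\Big\| - C^*\Big(\sum_{t=1}^T \mathbf{l}_t\Big) \le T\gamma. \] Consequently, any algorithm for the repeated game $P$ achieving convergence rate $\gamma(T)$, applied to online load balancing, has $\mathrm{Regret}(T) \le T\gamma(T)$.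
   Context: $\Delta(K) = \{\boldsymbol{\alpha} \in [0,1]^K : \sum_i \alpha_i = 1\}$; $\boldsymbol{\alpha}\odot\mathbf{l} = (\alpha_1 l_1,\dots,\alpha_K l_K)$; $C^*(\mathbf{l}) = \min_{\boldsymbol{\alpha}\in\Delta(K)}\|\boldsymbol{\alpha}\odot\mathbf{l}\|$. A norm is monotone if $\|\mathbf{x}\|\le\|\mathbf{y}\|$ whenever $|x_i|\le|y_i|$ for all $i$. $S = \{(\mathbf{x},\mathbf{y}) \in [0,1]^K\times[0,1]^K : \|\mathbf{x}\| \le C^*(\mathbf{y})\}$ and $\|(\mathbf{x},\mathbf{y})\|^+ = \|\mathbf{x}\|+\|\mathbf{y}\|$. Online load balancing: in each round $t=1,\dots,T$ the learner picks $\boldsymbol{\alpha}_t\in\Delta(K)$, then an adversary reveals $\mathbf{l}_t \in [0,1]^K$; $\mathrm{Regret}(T) = \|\sum_t \boldsymbol{\alpha}_t\odot\mathbf{l}_t\| - C^*(\sum_t \mathbf{l}_t)$. The repeated game $P$ has learner actions $\Delta(K)$, adversary actions $[0,1]^K$, vector payoff $r(\boldsymbol{\alpha},\mathbf{l}) = (\boldsymbol{\alpha}\odot\mathbf{l},\mathbf{l})$, target set $S$, and metric $\mathrm{dist}(\mathbf{r},\mathbf{s}) = \|\mathbf{r}-\mathbf{s}\|^+$; an algorithm has convergence rate $\gamma(T)$ if against every adversary $\min_{\mathbf{s}\in S}\mathrm{dist}(\bar{\mathbf{r}}_T,\mathbf{s}) \le \gamma(T)$, where $\bar{\mathbf{r}}_T$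 is the average payoff. *)

(* Defs.v *)
From mathcomp Require Import all_boot all_order all_algebra.
From mathcomp Require Import all_classical all_reals.
Set Implicit Arguments. Unset Strict Implicit. Unset Printing Implicit Defensive.
Import Order.TTheory GRing.Theory Num.Theory.
Local Open Scope ring_scope.
Local Open Scope classical_set_scope.

Section Defs.
Variables (R : realType) (K : nat).

Definition vec := 'I_K -> R.

Definition is_norm (N : vec -> R) : Prop :=
  [/\ forall x, N x = 0 -> x = (fun _ => 0),
      forall (a : R) x, N (fun i => a * x i) = `|a| * N x
    & forall x y, N (fun i => x i + y i) <= N x + N y].

Definition monotone_norm (N : vec -> R) : Prop :=
  is_norm N /\ forall x y, (forall i, `|x i| <= `|y i|) -> N x <= N y.

Definition simplex (a : vec) : Prop :=
  (forall i, 0 <= a i <= 1) /\ \sum_(i < K) a i = 1.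

Definition unit_box (l : vec) : Prop := forall i, 0 <= l i <= 1.

Definition hadamard (a l : vec) : vec := fun i => a i * l i.

(* C*(l) = min_{alpha in Delta(K)} ||alpha ⊙ l||, written as the infimum
   (the minimum is attained, so they coincide) *)
Definition Cstar (N : vec -> R) (l : vec) : R :=
  inf [set N (hadamard a l) | a in simplex].

Definition targetS (N : vec -> R) : set (vec * vec) :=
  [set xy | unit_box xy.1 /\ unit_box xy.2 /\ N xy.1 <= Cstar N xy.2].

Definition normplus (N : vec -> R) (r : vec * vec) : R := N r.1 + N r.2.

(* min_{s in S} ||r - s||^+ (as infimum; attained since S is compact) *)
Definition dist_to_S (N : vec -> R) (r : vec * vec) : R :=
  inf [set normplus N ((fun i => r.1 i - s.1 i), (fun i => r.2 i - s.2 i))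
      | s in targetS N].

(* average payoff (1/T) sum_{t<T} (alpha_t ⊙ l_t, l_t); rounds indexed 0..T-1 *)
Definition avg_payoff (T : nat) (a l : nat -> vec) : vec * vec :=
  ((fun i => T%:R^-1 * \sum_(t < T) a t i * l t i),
   (fun i => T%:R^-1 * \sum_(t < T) l t i)).

Definition regret (N : vec -> R) (T : nat) (a l : nat -> vec) : R :=
  N (fun i => \sum_(t < T) a t i * l t i) - Cstar N (fun i => \sum_(t < T) l t i).

(* A (deterministic) learner algorithm maps the history of past loss vectors
   to an action; it must always output a point of Delta(K). *)
Definition algorithm := seq vec -> vec.
Definition valid_algorithm (A : algorithm) : Prop := forall h, simplex (A h).

(* Actions played by A against the loss sequence l : round t (0-based) uses
   the history l_0, ..., l_{t-1}. *)
Definition plays (A : algorithm) (l : nat -> vec) : nat -> vec :=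
  fun t => A (mkseq l t).

(* convergence rate gamma(T): against every adversary (for a deterministic
   learner, every loss sequence in [0,1]^K), dist(rbar_T, S) <= gamma(T). *)
Definition has_rate (N : vec -> R) (A : algorithm) (gamma : nat -> R) : Prop :=
  forall T : nat, (1 <= T)%N -> forall l : nat -> vec,
    (forall t, (t < T)%N -> unit_box (l t)) ->
    dist_to_S N (avg_payoff T (plays A l) l) <= gamma T.

End Defs.

(* Main.v *)
Require Import Defs.
From mathcomp Require Import all_boot all_order all_algebra.
From mathcomp Require Import all_classical all_reals.
Import Order.TTheory GRing.Theory Num.Theory.
Local Open Scope ring_scope.
Local Open Scope classical_set_scope.

Section Aux.
Variables (R : realType) (K : nat) (N : vec R K -> R).
Hypothesis hN : monotone_norm N.

Lemma N0 : N (fun _ => 0) = 0.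
Proof.
case: hN => -[_ hs _] _.
have h := hs 0 (fun _ => 0).
have e : (fun i : 'I_K => (0:R) * (fun=> 0) i) = (fun=> 0) by apply: funext => i; rewrite mul0r.
by rewrite e normr0 mul0r in h.
Qed.

Lemma Nge0 x : 0 <= N x.
Proof.
case: hN => _ hm; rewrite -N0; apply: hm => i; by rewrite normr0.
Qed.

Lemma Nscale (c : R) x : 0 <= c -> N (fun i => c * x i) = c * N x.
Proof. by case: hN => -[_ hs _] _ hc; rewrite hs ger0_norm. Qed.

Lemma Cstar_lb y : has_lbound [set N (hadamard a y) | a in @simplex R K].
Proof. by exists 0 => z [a _ <-]; apply: Nge0. Qed.

Lemma key (T : nat) (a l : nat -> vec R K) (s : vec R K * vec R K) :
  (1 <= T)%N -> simplex (a 0%N) -> targetS N s ->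
  N (fun i => \sum_(t < T) a t i * l t i)
    - Cstar N (fun i => \sum_(t < T) l t i)
  <= T%:R * normplus N ((fun i => (avg_payoff T a l).1 i - s.1 i),
                        (fun i => (avg_payoff T a l).2 i - s.2 i)).
Proof.
move=> T1 sa0 [_ [_ hS]].
case: hN => -[_ hs htri] hm.
set X := (fun i => _); set L := (fun i => _).
set r1 := (avg_payoff T a l).1; set r2 := (avg_payoff T a l).2.
have T0 : 0 < T%:R :> R by rewrite ltr0n.
have TK : forall x : R, T%:R * (T%:R^-1 * x) = x.
  by move=> x; rewrite mulrA mulfV ?mulr1 ?mul1r // gt_eqF.
have eX : X = (fun i => T%:R * r1 i) by apply: funext => i; rewrite /r1 /= TK.
have eL : L = (fun i => T%:R * r2 i) by apply: funext => i; rewrite /r2 /= TK.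
rewrite /normplus /= mulrDr lerBlDr.
set d1 := N (fun i => r1 i - s.1 i); set d2 := N (fun i => r2 i - s.2 i).
have hX : N X <= T%:R * d1 + T%:R * N s.1.
  rewrite eX Nscale; last exact: ltW.
  rewrite -mulrDr ler_pM2l //.
  apply: le_trans (htri (fun i => r1 i - s.1 i) s.1); apply: hm => i; by rewrite subrK.
have hC : T%:R * N s.1 <= Cstar N L + T%:R * d2.
  rewrite -lerBlDr; apply: lb_le_inf.
    by exists (N (hadamard (a 0%N) L)), (a 0%N).
  move=> z [al hal <-].
  rewrite lerBlDr.
  have : N s.1 <= N (hadamard al r2) + d2.
    apply: (le_trans hS); apply: le_trans (ge_inf (Cstar_lb s.2) _) _.
      by exists al.
    have e1 : N (hadamard al s.2) <= N (fun i => hadamard al r2 i + hadamard al (fun i => s.2 i - r2 i) i).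
      by apply: hm => i; rewrite /hadamard -mulrDr subrKC.
    apply: (le_trans e1); apply: le_trans (htri _ _) _.
    - rewrite lerD2l; apply: hm => i; rewrite /hadamard normrM distrC.
      case: hal => /(_ i) /andP [h0 h1] _.
      by rewrite ger0_norm // ler_piMl.
  move=> h.
  have hL : N (hadamard al L) = T%:R * N (hadamard al r2).
    rewrite -Nscale; last exact: ltW.
    by congr N; apply: funext => i; rewrite eL /hadamard mulrCA.
  by rewrite hL -mulrDr ler_pM2l.
apply: (le_trans hX); rewrite -addrA lerD2l addrC; exact: hC.
Qed.

End Aux.

Theorem proposition2 (R : realType) (K : nat) (N : vec R K -> R) :
  monotone_norm N ->
  (forall (T : nat) (a l : nat -> vec R K) (gamma : R),
     (1 <= T)%N ->
     (forall t, (t < T)%N -> simplex (a t)) ->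
     (forall t, (t < T)%N -> unit_box (l t)) ->
     dist_to_S N (avg_payoff T a l) <= gamma ->
     N (fun i => \sum_(t < T) a t i * l t i)
       - Cstar N (fun i => \sum_(t < T) l t i) <= T%:R * gamma)
  /\
  (forall (A : algorithm R K) (gamma : nat -> R),
     valid_algorithm A -> has_rate N A gamma ->
     forall (T : nat) (l : nat -> vec R K), (1 <= T)%N ->
     (forall t, (t < T)%N -> unit_box (l t)) ->
     regret N T (plays A l) l <= T%:R * gamma T).
Proof.
move=> hN.
have P1 : forall (T : nat) (a l : nat -> vec R K) (gamma : R),
     (1 <= T)%N ->
     (forall t, (t < T)%N -> simplex (a t)) ->
     (forall t, (t < T)%N -> unit_box (l t)) ->
     dist_to_S N (avg_payoff T a l) <= gamma ->
     N (fun i => \sum_(t < T) a t i * l t i)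
       - Cstar N (fun i => \sum_(t < T) l t i) <= T%:R * gamma.
  move=> T a l g T1 ha hl hd.
  have sa0 := ha 0%N T1.
  have T0 : 0 < T%:R :> R by rewrite ltr0n.
  rewrite -ler_pdivrMl //; apply: le_trans hd.
  apply: lb_le_inf.
    exists (normplus N ((fun i => (avg_payoff T a l).1 i - 0),
                        (fun i => (avg_payoff T a l).2 i - 0))).
    exists ((fun _ => 0), (fun _ => 0)) => //.
    split; first by move=> i; rewrite lexx ler01.
    split; first by move=> i; rewrite lexx ler01.
    rewrite /= N0 //; apply: lb_le_inf.
      by exists (N (hadamard (a 0%N) (fun _ => 0))), (a 0%N).
    move=> z [al _ <-]; rewrite /hadamard.
    have -> : (fun i => al i * 0) = (fun _ => 0 : R).
      by apply: funext => i; rewrite mulr0.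
    by rewrite N0.
  move=> z [s hs <-]; rewrite ler_pdivrMl //; exact: key.
split=> //.
move=> A g hA hr T l T1 hl; rewrite /regret; apply: P1 => //.
- by move=> t _; apply: hA.
- exact: hr.
Qed.
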